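(* Let $P_1,\dots,P_N\in\mathbb{R}^2$ be fixed regular points and let $T_0$ be a full Steiner topology on them. Let $S$ and $S'$ be two adjacent Steiner points of $T_0$, where the neighbors of $S$ are $\{A,B,S'\}$ and the neighbors of $S'$ are $\{C,D,S\}$ (each of $A,B,C,D$ may be a regular or a Steiner point). Let $T_1$ and $T_2$ be the two other topologies obtained from $T_0$ by reorganizing the neighborhood of $S,S'$: in $T_1$ the neighbors of $S$ are $\{B,C,S'\}$ and those of $S'$ are $\{A,D,S\}$; in $T_2$ the neighbors of $S$ are $\{A,C,S'\}$ and those of $S'$ are $\{B,D,S\}$; all other adjacencies are unchanged. Consider a minimal tree for $T_0$, i.e. a placement of the Steiner points minimizing the total Euclidean edge length among all placements realizing $T_0$ (coincident points allowed), and suppose that in this minimal tree the segments $[AB]$ and $[CD]$ intersect. Then: (1) $S$ and $S'$ have the same coordinates; (2) the length $L_{T_0}$ of the minimal tree for $T_0$ satisfies $L_{T_0}\ge L_{T_i}$ for $i=1,2$, where $L_{T_i}$ is the minimal length of a tree with topology $T_i$; (3) in this minimal tree, $|AS|+|BS|+|CS'|+|DS'|+|SS'| = |AB|+|CD|$.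
   Context: A Steiner tree on $N$ given (regular) points is a tree in the plane whose vertex set consists of the regular points together with additional vertices called Steiner points, each Steiner point having degree exactly 3; its length is the sum of the Euclidean lengths of its edges. The topology of a Steiner tree is its combinatorial structure (which vertices are adjacent). A full topology is one with the maximal number $N-2$ of Steiner points. For a fixed topology, the regular points are fixed and the Steiner point positions are variables in $\mathbb{R}^2$; positions may coincide with each other or with regular points (degenerate trees, with zero-length edges). *)

(* Defs.v *)
From Stdlib Require Import Reals.
From mathcomp Require Import all_boot.

Set Implicit Arguments.
Unset Strict Implicit.
Unset Printing Implicit Defensive.

Local Open Scope R_scope.

Definition pt : Type := (R * R)%type.

Definition edist (p q : pt) : R :=
  sqrt (Rplus (Rsqr (Rminus (fst p) (fst q))) (Rsqr (Rminus (snd p) (snd q)))).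

(* Vertices of a Steiner tree on N regular points with N-2 Steiner points:
   inl i = regular point P_i, inr k = Steiner point S_k. *)
Definition vtx (N : nat) : finType := ('I_N + 'I_(N - 2)%nat)%type.

Definition topology (N : nat) := rel (vtx N).

(* A full Steiner topology: a tree (symmetric, loopless, connected, with
   #V - 1 edges, each edge being counted twice as ordered pairs) on the N
   regular points and the N-2 Steiner points, every Steiner point of degree 3. *)
Definition full_topology (N : nat) (T : topology N) : Prop :=
  [/\ symmetric T,
      irreflexive T,
      (forall x y : vtx N, connect T x y),
      (#|[set p : vtx N * vtx N | T p.1 p.2]| = (#|vtx N| - 1) * 2)%nat
    & (forall k : 'I_(N - 2)%nat, #|[set y : vtx N | T (inr k) y]| = 3%nat)].

Definition vpos (N : nat) (P : 'I_N -> pt) (X : 'I_(N - 2)%nat -> pt) (v : vtx N) : pt :=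
  match v with inl i => P i | inr k => X k end.

Fixpoint Rsum (l : seq R) : R :=
  match l with [::] => R0 | x :: l' => Rplus x (Rsum l') end.

(* Total Euclidean length of the tree with topology T and placement X:
   sum over ordered adjacent pairs, divided by 2 (each edge appears twice). *)
Definition tree_length (N : nat) (T : topology N) (P : 'I_N -> pt)
    (X : 'I_(N - 2)%nat -> pt) : R :=
  Rdiv (Rsum [seq edist (vpos P X p.1) (vpos P X p.2)
          | p <- enum [set p : (vtx N * vtx N)%type | T p.1 p.2]]) 2.

Definition minimal_tree (N : nat) (T : topology N) (P : 'I_N -> pt)
    (X : 'I_(N - 2)%nat -> pt) : Prop :=
  forall Y : 'I_(N - 2)%nat -> pt, Rle (tree_length T P X) (tree_length T P Y).

Definition upair_eq (N : nat) (u v a b : vtx N) : bool :=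
  ((u == a) && (v == b)) || ((u == b) && (v == a)).

(* Reorganisation of the neighbourhood of the adjacent Steiner points S, S':
   the neighbour X of S is moved to S' and the neighbour Y of S' is moved
   to S; all other adjacencies are unchanged. *)
Definition swap_topology (N : nat) (T : topology N) (S S' X Y : vtx N) : topology N :=
  fun u v =>
    if upair_eq u v S X || upair_eq u v S' Y then false
    else if upair_eq u v S Y || upair_eq u v S' X then true
    else T u v.

Definition segments_intersect (p q r s : pt) : Prop :=
  exists t u : R, Rle 0 t /\ Rle t 1 /\ Rle 0 u /\ Rle u 1 /\
    Rplus (fst p) (Rmult t (Rminus (fst q) (fst p)))
      = Rplus (fst r) (Rmult u (Rminus (fst s) (fst r))) /\
    Rplus (snd p) (Rmult t (Rminus (snd q) (snd p)))
      = Rplus (snd r) (Rmult u (Rminus (snd s) (snd r))).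

(* Main.v *)
From HB Require Import structures.
Require Import Defs.
From Stdlib Require Import Reals Lra Psatz.
From mathcomp Require Import all_boot.
Module Aux.
Local Open Scope R_scope.

Lemma edist_ge0 p q : 0 <= edist p q.
Proof. apply sqrt_pos. Qed.

Lemma edist_sym p q : edist p q = edist q p.
Proof. rewrite /edist. by rewrite (Rsqr_neg_minus p.1) (Rsqr_neg_minus p.2). Qed.

Lemma edist_tri p r q : edist p q <= edist p r + edist r q.
Proof.
rewrite /edist.
set a := p.1 - r.1. set b := p.2 - r.2. set c := r.1 - q.1. set d := r.2 - q.2.
have -> : p.1 - q.1 = a + c by rewrite /a /c; ring.
have -> : p.2 - q.2 = b + d by rewrite /b /d; ring.
have Y1 : 0 <= a² + b² by apply Rplus_le_le_0_compat; apply Rle_0_sqr.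
have Y2 : 0 <= c² + d² by apply Rplus_le_le_0_compat; apply Rle_0_sqr.
set u := sqrt (a² + b²). set w := sqrt (c² + d²).
have u0 : 0 <= u by apply sqrt_pos.
have w0 : 0 <= w by apply sqrt_pos.
have uu : u * u = a² + b² by apply sqrt_sqrt.
have ww : w * w = c² + d² by apply sqrt_sqrt.
rewrite -[u + w]sqrt_Rsqr; last lra.
apply sqrt_le_1_alt.
have key : a * c + b * d <= u * w.
  have h : (a*c+b*d)*(a*c+b*d) <= (u*w)*(u*w).
    have -> : (u*w)*(u*w) = (u*u)*(w*w) by ring.
    rewrite uu ww /Rsqr. have := Rle_0_sqr (a*d-b*c). rewrite /Rsqr. lra.
  have uw0 : 0 <= u * w by apply Rmult_le_pos.
  destruct (Rle_lt_dec (a*c+b*d) (u*w)) as [hh|hh]; first exact hh.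
  exfalso. have : (u*w)*(u*w) < (a*c+b*d)*(a*c+b*d) by apply Rmult_le_0_lt_compat.
  lra.
rewrite /Rsqr in uu ww *. nra.
Qed.

Lemma edist_eq0 p q : edist p q = 0 -> p = q.
Proof.
rewrite /edist => h.
apply sqrt_eq_0 in h; last by apply Rplus_le_le_0_compat; apply Rle_0_sqr.
case: (Rplus_sqr_eq_0 _ _ h) => h1 h2.
case: p q h1 h2 {h} => [x y] [x' y'] /= h1 h2.
f_equal; lra.
Qed.

Lemma edist_seg (p q : pt) t : 0 <= t <= 1 ->
  let I := (p.1 + t * (q.1 - p.1), p.2 + t * (q.2 - p.2)) in
  edist I p + edist I q = edist p q.
Proof.
move=> [t0 t1] I.
rewrite /edist /I /=.
have -> : (p.1 + t * (q.1 - p.1) - p.1)² + (p.2 + t * (q.2 - p.2) - p.2)²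
   = t² * ((p.1 - q.1)² + (p.2 - q.2)²) by rewrite /Rsqr; ring.
have -> : (p.1 + t * (q.1 - p.1) - q.1)² + (p.2 + t * (q.2 - p.2) - q.2)²
   = (1 - t)² * ((p.1 - q.1)² + (p.2 - q.2)²) by rewrite /Rsqr; ring.
rewrite !sqrt_mult_alt; try apply Rle_0_sqr.
rewrite !sqrt_sqrt; try lra. all: try ring. all: lra.
Qed.

Local Open Scope R_scope.

Lemma Rplus_assoc' : associative Rplus. Proof. move=> x y z; ring. Qed.
HB.instance Definition _ := Monoid.isComLaw.Build R R0 Rplus Rplus_assoc' Rplus_comm Rplus_0_l.

Lemma Rsum_big (T : Type) (f : T -> R) l :
  Rsum [seq f x | x <- l] = \big[Rplus/R0]_(x <- l) f x.
Proof. elim: l => [|x l IH] /=; by rewrite ?big_nil ?big_cons ?IH. Qed.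

Lemma big_ge0 (I : finType) (Q : pred I) (g : I -> R) :
  (forall v, 0 <= g v) -> 0 <= \big[Rplus/R0]_(v | Q v) g v.
Proof.
move=> g0; apply: (big_ind (fun x => 0 <= x)) => //; first lra.
move=> x y; lra.
Qed.

Lemma big_mono (I : finType) (Q Q' : pred I) (g : I -> R) :
  (forall v, Q v -> Q' v) -> (forall v, 0 <= g v) ->
  \big[Rplus/R0]_(v | Q v) g v <= \big[Rplus/R0]_(v | Q' v) g v.
Proof.
move=> QQ g0; rewrite [X in _ <= X](bigID Q) /=.
have -> : \big[Rplus/R0]_(i | Q' i && Q i) g i = \big[Rplus/R0]_(v | Q v) g v.
  apply: eq_bigl => v; case Qv: (Q v); rewrite ?andbF ?andbT //; exact: QQ.
have := @big_ge0 I (fun i => Q' i && ~~ Q i) g g0; lra.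
Qed.

Lemma sum2 (I : finType) (a b : I) (Q : pred I) (g : I -> R) :
  a != b -> (forall v, Q v = (v == a) || (v == b)) ->
  \big[Rplus/R0]_(v | Q v) g v = g a + g b.
Proof.
move=> ab QE; rewrite (bigD1 a) ?QE ?eqxx //; congr Rplus.
apply: big_pred1 => v; rewrite QE /=.
by case: (eqVneq v a) => [->|nva]; rewrite ?eqxx ?(negbTE ab) //= andbT.
Qed.

Lemma sum2_le (I : finType) (a b : I) (Q : pred I) (g : I -> R) :
  (forall v, 0 <= g v) -> (forall v, Q v -> (v == a) || (v == b)) ->
  \big[Rplus/R0]_(v | Q v) g v <= g a + g b.
Proof.
move=> g0 QE.
apply: Rle_trans (@big_mono I Q (fun v => (v == a) || (v == b)) g QE g0) _.
case: (eqVneq a b) => [<-|ab]; last by rewrite (@sum2 I a b (fun v => (v == a) || (v == b)) g ab) //; apply Rle_refl.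
rewrite (big_pred1 a); last by move=> v; rewrite /= orbb.
have := g0 a; lra.
Qed.

Section Decomp.
Variables (N : nat) (P : 'I_N -> pt) (s s' : 'I_(N - 2)).

Definition FF (Z : 'I_(N - 2) -> pt) (i j : vtx N) := edist (vpos P Z i) (vpos P Z j).
Definition Len (T : topology N) Z := \big[Rplus/R0]_(p | T p.1 p.2) FF Z p.1 p.2.
Definition nss (v : vtx N) := (v != inr s) && (v != inr s').
Definition NB (T : topology N) Z x := \big[Rplus/R0]_(j | T x j && nss j) FF Z x j.
Definition Rest (T : topology N) Z :=
  \big[Rplus/R0]_(p | (T p.1 p.2 && nss p.1) && nss p.2) FF Z p.1 p.2.

Lemma tl_Len T Z : tree_length T P Z = Len T Z / 2.
Proof.
rewrite /tree_length Rsum_big big_enum /Len; congr Rdiv.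
by apply: eq_bigl => p; rewrite inE.
Qed.

Lemma sum_nss2 (g : vtx N -> R) : s != s' ->
  \big[Rplus/R0]_(i | ~~ nss i) g i = g (inr s) + g (inr s').
Proof.
move=> ne; apply: sum2; first by apply/negP => /eqP [] /eqP; apply/negP.
by move=> v; rewrite /nss negb_and !negbK.
Qed.

Lemma decomp (T : topology N) Z :
  (forall u v, T u v = T v u) -> T (inr s) (inr s) = false ->
  T (inr s') (inr s') = false -> T (inr s) (inr s') -> s != s' ->
  Len T Z = Rest T Z + 2 * (NB T Z (inr s) + NB T Z (inr s')) + 2 * edist (Z s) (Z s').
Proof.
move=> Tsym Ts1 Ts2 Tss ne.
rewrite /Len (bigID (fun p => nss p.1)) /=.
rewrite (bigID (fun p => nss p.2)) /= [X in _ + X](bigID (fun p => nss p.2)) /=.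
have E1 : \big[Rplus/R0]_(j | (T j.1 j.2 && nss j.1) && ~~ nss j.2) FF Z j.1 j.2
        = \big[Rplus/R0]_(j | (T j.1 j.2 && ~~ nss j.1) && nss j.2) FF Z j.1 j.2.
  rewrite (reindex_inj (h := fun p : vtx N * vtx N => (p.2, p.1))) /=; last first.
    by move=> [a b] [c d] /= [-> ->].
  apply: eq_big => [j|j _]; last by rewrite /FF edist_sym.
  by rewrite Tsym; case: (T _ _); case: (nss _); case: (nss _).
rewrite E1.
have E2 : \big[Rplus/R0]_(j | (T j.1 j.2 && ~~ nss j.1) && nss j.2) FF Z j.1 j.2
        = \big[Rplus/R0]_(i | ~~ nss i) \big[Rplus/R0]_(j | T i j && nss j) FF Z i j.
  rewrite pair_big_dep; apply: eq_bigl => j.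
  by case: (T _ _); case: (nss _); case: (nss _).
have E3 : \big[Rplus/R0]_(j | (T j.1 j.2 && ~~ nss j.1) && ~~ nss j.2) FF Z j.1 j.2
        = \big[Rplus/R0]_(i | ~~ nss i) \big[Rplus/R0]_(j | T i j && ~~ nss j) FF Z i j.
  rewrite pair_big_dep; apply: eq_bigl => j.
  by case: (T _ _); case: (nss _); case: (nss _).
rewrite E2 E3 !sum_nss2 //.
have nss' : (inr s : vtx N) != inr s'.
  by apply/negP => /eqP [] /eqP; apply/negP.
have E4 : \big[Rplus/R0]_(j | T (inr s) j && ~~ nss j) FF Z (inr s) j = FF Z (inr s) (inr s').
  apply: big_pred1 => v /=; rewrite /nss negb_and !negbK.
  case: (eqVneq v (inr s)) => [->|_]; first by rewrite Ts1 (negbTE nss').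
  by case: (eqVneq v (inr s')) => [->|_]; rewrite ?Tss ?andbF.
have E5 : \big[Rplus/R0]_(j | T (inr s') j && ~~ nss j) FF Z (inr s') j = FF Z (inr s') (inr s).
  apply: big_pred1 => v /=; rewrite /nss negb_and !negbK.
  case: (eqVneq v (inr s')) => [->|_]; first by rewrite Ts2 eq_sym (negbTE nss').
  by case: (eqVneq v (inr s)) => [->|_]; [rewrite Tsym Tss | rewrite andbF].
rewrite E4 E5.
rewrite /Rest /NB /FF /= (edist_sym (Z s')).
set X1 := \big[Rplus/R0]_(i | _) _. set X2 := \big[Rplus/R0]_(j | T (inr s) j && _) _. set X3 := \big[Rplus/R0]_(j | T (inr s') j && _) _. lra.
Qed.

End Decomp.

Local Open Scope R_scope.

Lemma upair_sym N (u v a b : vtx N) : upair_eq u v a b = upair_eq v u a b.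
Proof. by rewrite /upair_eq; case: (u == a); case: (v == b); case: (u == b); case: (v == a). Qed.

Section Swap.
Variables (N : nat) (T : topology N) (S S' X Y : vtx N).
Hypotheses (XS : X != S) (XS' : X != S') (YS : Y != S) (YS' : Y != S') (SS' : S != S').
Let SX : S != X. Proof. by rewrite eq_sym. Qed.
Let S'X : S' != X. Proof. by rewrite eq_sym. Qed.
Let SY : S != Y. Proof. by rewrite eq_sym. Qed.
Let S'Y : S' != Y. Proof. by rewrite eq_sym. Qed.
Let S'S : S' != S. Proof. by rewrite eq_sym. Qed.

Lemma swap_sym : (forall u v, T u v = T v u) ->
  forall u v, swap_topology T S S' X Y u v = swap_topology T S S' X Y v u.
Proof. by move=> Ts u v; rewrite /swap_topology !(@upair_sym N u v) Ts. Qed.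

Lemma swap_out u v : u != S -> u != S' -> v != S -> v != S' ->
  swap_topology T S S' X Y u v = T u v.
Proof.
move=> h1 h2 h3 h4; rewrite /swap_topology /upair_eq.
by rewrite (negbTE h1) (negbTE h2) (negbTE h3) (negbTE h4) !andbF.
Qed.

Lemma swap_SS : swap_topology T S S' X Y S S = T S S.
Proof.
rewrite /swap_topology /upair_eq eqxx.
by rewrite (negbTE SX) (negbTE SY) (negbTE SS').
Qed.

Lemma swap_S'S' : swap_topology T S S' X Y S' S' = T S' S'.
Proof.
rewrite /swap_topology /upair_eq eqxx.
by rewrite (negbTE S'X) (negbTE S'Y) (negbTE S'S).
Qed.

Lemma swap_SS' : swap_topology T S S' X Y S S' = T S S'.
Proof.
rewrite /swap_topology /upair_eq !eqxx.
by rewrite (negbTE SX) (negbTE SY) (negbTE SS') (negbTE S'X) (negbTE S'Y).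
Qed.

Lemma swap_nbS v : v != S -> v != S' -> swap_topology T S S' X Y S v ->
  (v != X) && ((v == Y) || T S v).
Proof.
move=> h1 h2; rewrite /swap_topology /upair_eq eqxx.
rewrite (negbTE h1) (negbTE h2) (negbTE SS') !andbF /=.
by case: (v == X); case: (v == Y).
Qed.

Lemma swap_nbS' v : v != S -> v != S' -> swap_topology T S S' X Y S' v ->
  (v != Y) && ((v == X) || T S' v).
Proof.
move=> h1 h2; rewrite /swap_topology /upair_eq eqxx.
rewrite (negbTE h1) (negbTE h2) (negbTE S'S) !andbF /=.
by case: (v == X); case: (v == Y).
Qed.
End Swap.

Lemma edist_refl p : edist p p = 0.
Proof. by rewrite /edist !Rminus_diag Rsqr_0 Rplus_0_l sqrt_0. Qed.

Lemma card3 (N : nat) (a b c : vtx N) :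
  #|[set a; b; c]| = 3%nat -> [/\ a != b, a != c & b != c].
Proof.
have -> : [set a; b; c] = a |: [set b; c] by apply/setP => x; rewrite !inE; case: (x == a); case: (x == b); case: (x == c).
rewrite cardsU1 cards2 in_set2 negb_or.
by case: (a == b); case: (a == c); case: (b == c).
Qed.

End Aux.
Import Aux.

Theorem mainTheorem1 (N : nat) (P : 'I_N -> pt) (T0 : topology N)
    (s s' : 'I_(N - 2)) (A B C D : vtx N) (X0 : 'I_(N - 2) -> pt) :
  full_topology T0 ->
  (forall v, T0 (inr s) v = [|| v == A, v == B | v == inr s']) ->
  (forall v, T0 (inr s') v = [|| v == C, v == D | v == inr s]) ->
  minimal_tree T0 P X0 ->
  segments_intersect (vpos P X0 A) (vpos P X0 B) (vpos P X0 C) (vpos P X0 D) ->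
  let T1 := swap_topology T0 (inr s) (inr s') A C in
  let T2 := swap_topology T0 (inr s) (inr s') B C in
  [/\ X0 s = X0 s',
      (exists X1, Rle (tree_length T1 P X1) (tree_length T0 P X0)),
      (exists X2, Rle (tree_length T2 P X2) (tree_length T0 P X0))
    & Rplus (Rplus (Rplus (Rplus (edist (vpos P X0 A) (X0 s)) (edist (vpos P X0 B) (X0 s)))
                          (edist (vpos P X0 C) (X0 s'))) (edist (vpos P X0 D) (X0 s')))
            (edist (X0 s) (X0 s'))
      = Rplus (edist (vpos P X0 A) (vpos P X0 B)) (edist (vpos P X0 C) (vpos P X0 D))].
Proof.
move=> [Tsym Tirr _ _ Tdeg] hs hs' Hmin [t [u [t0 [t1 [u0 [u1 [Hx Hy]]]]]]] T1 T2.
have Ts1 : T0 (inr s) (inr s) = false := Tirr (inr s).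
have Ts2 : T0 (inr s') (inr s') = false := Tirr (inr s').
have Tss : T0 (inr s) (inr s') by rewrite hs eqxx !orbT.
have ne : s != s'.
  by apply/negP => /eqP E; move: Tss; rewrite E Ts2.
have nee : (inr s : vtx N) != inr s' by apply/negP => /eqP [] /eqP; apply/negP.
have [AB AS' BS'] : [/\ A != B, A != inr s' & B != inr s'].
  apply: card3; have <- := Tdeg s; congr (#|pred_of_set _|).
  apply/setP => y.
  by rewrite !inE hs; case: (y == A); case: (y == B); case: (y == inr s').
have [CD CS DS] : [/\ C != D, C != inr s & D != inr s].
  apply: card3; have <- := Tdeg s'; congr (#|pred_of_set _|).
  apply/setP => y.
  by rewrite !inE hs'; case: (y == C); case: (y == D); case: (y == inr s).
have [AS BS] : A != inr s /\ B != inr s.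
  move: Ts1; rewrite hs => /norP [h1 /norP [h2 _]].
  by split; rewrite eq_sym.
have [CS' DS'] : C != inr s' /\ D != inr s'.
  move: Ts2; rewrite hs' => /norP [h1 /norP [h2 _]].
  by split; rewrite eq_sym.

Local Open Scope R_scope.
pose I : pt := ((vpos P X0 A).1 + t * ((vpos P X0 B).1 - (vpos P X0 A).1), (vpos P X0 A).2 + t * ((vpos P X0 B).2 - (vpos P X0 A).2)).
have HI : I = ((vpos P X0 C).1 + u * ((vpos P X0 D).1 - (vpos P X0 C).1), (vpos P X0 C).2 + u * ((vpos P X0 D).2 - (vpos P X0 C).2)) by rewrite /I Hx Hy.
pose Y k := if k == s then I else if k == s' then I else X0 k.
have Ys : Y s = I by rewrite /Y eqxx.
have Ys' : Y s' = I by rewrite /Y eqxx; case: ifP.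
have Hpos : forall v, nss N s s' v -> vpos P Y v = vpos P X0 v.
  case=> [i|k] //= /andP[h1 h2]; rewrite /Y.
  have -> : (k == s) = false by apply: negbTE; apply: contra h1 => /eqP ->.
  have -> : (k == s') = false by apply: negbTE; apply: contra h2 => /eqP ->.
  by [].
have nA : nss N s s' A by rewrite /nss AS AS'.
have nB : nss N s s' B by rewrite /nss BS BS'.
have nC : nss N s s' C by rewrite /nss CS CS'.
have nD : nss N s s' D by rewrite /nss DS DS'.
have pA := Hpos A nA. have pB := Hpos B nB. have pC := Hpos C nC. have pD := Hpos D nD.
have nbA : forall Z, NB N P s s' T0 Z (inr s) = (edist (Z s) (vpos P Z A) + edist (Z s) (vpos P Z B)).
  move=> Z; rewrite /NB /FF /=.
  apply: (@sum2 _ A B _ (fun j => edist (Z s) (vpos P Z j))) AB _ => j.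
  rewrite hs /nss.
  case: (eqVneq j A) => [->|jA]; first by rewrite AS AS' ?eqxx.
  case: (eqVneq j B) => [->|jB]; first by rewrite BS BS' ?eqxx ?orbT.
  rewrite /=.
  by case: (eqVneq j (inr s')) => [->|_]; rewrite ?eqxx ?andbF.
have nbC : forall Z, NB N P s s' T0 Z (inr s') = (edist (Z s') (vpos P Z C) + edist (Z s') (vpos P Z D)).
  move=> Z; rewrite /NB /FF /=.
  apply: (@sum2 _ C D _ (fun j => edist (Z s') (vpos P Z j))) CD _ => j.
  rewrite hs' /nss.
  case: (eqVneq j C) => [->|jC]; first by rewrite CS CS' ?eqxx.
  case: (eqVneq j D) => [->|jD]; first by rewrite DS DS' ?eqxx ?orbT.
  rewrite /=.
  by case: (eqVneq j (inr s)) => [->|_]; rewrite ?eqxx ?andbF.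
have R1 : Rest N P s s' T0 Y = Rest N P s s' T0 X0.
  apply: eq_bigr => p /andP[/andP[_ h1] h2]; by rewrite /FF !Hpos.
have Rsw : forall X Z, Rest N P s s' (swap_topology T0 (inr s) (inr s') X C) Z = Rest N P s s' T0 Z.
  move=> X Z; apply: eq_bigl => p.
  case h1: (nss N s s' p.1); case h2: (nss N s s' p.2); rewrite ?andbF ?andbT //.
  move/andP: h1 => [h1 h1']; move/andP: h2 => [h2 h2'].
  by rewrite swap_out.
have L0 := @decomp N P s s' T0 X0 Tsym Ts1 Ts2 Tss ne.
have LY := @decomp N P s s' T0 Y Tsym Ts1 Ts2 Tss ne.
rewrite nbA nbC R1 Ys Ys' pA pB pC pD edist_refl in LY.
rewrite nbA nbC in L0.
have Hm := Hmin Y; rewrite !tl_Len L0 LY in Hm.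
have segAB : (edist I (vpos P X0 A) + edist I (vpos P X0 B) = edist (vpos P X0 A) (vpos P X0 B)) by apply: edist_seg; split.
have segCD : (edist I (vpos P X0 C) + edist I (vpos P X0 D) = edist (vpos P X0 C) (vpos P X0 D)) by rewrite HI; apply: edist_seg; split.
have triAB := edist_tri (vpos P X0 A) (X0 s) (vpos P X0 B).
have triCD := edist_tri (vpos P X0 C) (X0 s') (vpos P X0 D).
have e0 := edist_ge0 (X0 s) (X0 s').
rewrite !(edist_sym (X0 s)) !(edist_sym (X0 s')) in Hm.
rewrite (edist_sym (X0 s) (vpos P X0 B)) in triAB.
rewrite (edist_sym (X0 s') (vpos P X0 D)) in triCD.
have Ee0 : edist (X0 s) (X0 s') = 0 by lra.
have Eloc : (edist (vpos P X0 A) (X0 s) + edist (vpos P X0 B) (X0 s) + edist (vpos P X0 C) (X0 s') + edist (vpos P X0 D) (X0 s') + edist (X0 s) (X0 s')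
           = edist (vpos P X0 A) (vpos P X0 B) + edist (vpos P X0 C) (vpos P X0 D)) by lra.
have Lval : (Len N P T0 X0 = Rest N P s s' T0 X0 + 2 * (edist (vpos P X0 A) (vpos P X0 B) + edist (vpos P X0 C) (vpos P X0 D))).
  rewrite L0 !(edist_sym (X0 s)) !(edist_sym (X0 s')); lra.
have YSS : forall (X : vtx N), X != inr s -> X != inr s' ->
  (Len N P (swap_topology T0 (inr s) (inr s') X C) Y =
   Rest N P s s' T0 X0 + 2 * (NB N P s s' (swap_topology T0 (inr s) (inr s') X C) Y (inr s)
     + NB N P s s' (swap_topology T0 (inr s) (inr s') X C) Y (inr s'))).
  move=> X XS XS'.
  rewrite (@decomp N P s s') //.
  - by rewrite Rsw R1 Ys Ys' edist_refl; lra.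
  - by apply: swap_sym.
  - by rewrite swap_SS.
  - by rewrite swap_S'S'.
  - by rewrite swap_SS'.
split => //.
- exact: edist_eq0.
- exists Y; rewrite !tl_Len YSS // Lval.
  have nb1 : (NB N P s s' T1 Y (inr s) <= edist I (vpos P X0 B) + edist I (vpos P X0 C)).
    rewrite /NB /FF /= Ys -pB -pC.
    apply: (@sum2_le _ B C _ (fun j => edist I (vpos P Y j))) => [j|j /andP[Tj nj]]; first exact: edist_ge0.
    have [j1 j2] : j != inr s /\ j != inr s' by move/andP: nj.
    move: (@swap_nbS N T0 _ _ _ _ nee j j1 j2 Tj) => /andP[jA]; rewrite hs (negbTE jA) (negbTE j2) /= orbF.
    by case/orP => ->; rewrite ?orbT.
  have nb2 : (NB N P s s' T1 Y (inr s') <= edist I (vpos P X0 A) + edist I (vpos P X0 D)).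
    rewrite /NB /FF /= Ys' -pA -pD.
    apply: (@sum2_le _ A D _ (fun j => edist I (vpos P Y j))) => [j|j /andP[Tj nj]]; first exact: edist_ge0.
    have [j1 j2] : j != inr s /\ j != inr s' by move/andP: nj.
    move: (@swap_nbS' N T0 _ _ _ _ nee j j1 j2 Tj) => /andP[jC]; rewrite hs' (negbTE jC) (negbTE j1) /= orbF.
    by case/orP => ->; rewrite ?orbT.
  rewrite /T1 in nb1 nb2; lra.
- exists Y; rewrite !tl_Len YSS // Lval.
  have nb1 : (NB N P s s' T2 Y (inr s) <= edist I (vpos P X0 A) + edist I (vpos P X0 C)).
    rewrite /NB /FF /= Ys -pA -pC.
    apply: (@sum2_le _ A C _ (fun j => edist I (vpos P Y j))) => [j|j /andP[Tj nj]]; first exact: edist_ge0.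
    have [j1 j2] : j != inr s /\ j != inr s' by move/andP: nj.
    move: (@swap_nbS N T0 _ _ _ _ nee j j1 j2 Tj) => /andP[jB]; rewrite hs (negbTE jB) (negbTE j2) /= orbF.
    by case/orP => ->; rewrite ?orbT.
  have nb2 : (NB N P s s' T2 Y (inr s') <= edist I (vpos P X0 B) + edist I (vpos P X0 D)).
    rewrite /NB /FF /= Ys' -pB -pD.
    apply: (@sum2_le _ B D _ (fun j => edist I (vpos P Y j))) => [j|j /andP[Tj nj]]; first exact: edist_ge0.
    have [j1 j2] : j != inr s /\ j != inr s' by move/andP: nj.
    move: (@swap_nbS' N T0 _ _ _ _ nee j j1 j2 Tj) => /andP[jC]; rewrite hs' (negbTE jC) (negbTE j1) /= orbF.
    by case/orP => ->; rewrite ?orbT.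
  rewrite /T2 in nb1 nb2; lra.
Qed.
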